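(* Let $G$ be a threshold graph and let $\lambda\neq 0$ be a real number. Then there exists a matrix $M\in S(G)$ such that $\mathrm{DSpec}(M)\subseteq\{-\lambda,0,\lambda,2\lambda\}$. In particular, $q(G)\le 4$.
   Context: A threshold graph is a (simple, not necessarily connected) graph obtained from a single vertex by repeatedly adding either a new isolated vertex or a new dominating vertex (a vertex adjacent to all previously added vertices). For a simple graph $G$ on vertices $v_1,\dots,v_n$, $S(G)$ denotes the set of all real symmetric $n\times n$ matrices $A=(a_{ij})$ such that for all $i\neq j$, $a_{ij}\neq 0$ if and only if $\{v_i,v_j\}$ is an edge of $G$ (diagonal entries are arbitrary). For a square matrix $A$, $\mathrm{DSpec}(A)$ is the set of distinct eigenvalues of $A$, and $q(G)=\min\{|\mathrm{DSpec}(A)| : A\in S(G)\}$. *)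

(* Defs.v *)
From mathcomp Require Import all_boot all_order all_algebra all_fingroup.
From mathcomp Require Import reals.
Set Implicit Arguments. Unset Strict Implicit. Unset Printing Implicit Defensive.
Import Order.TTheory GRing.Theory Num.Theory.
Local Open Scope ring_scope.

Definition simple_graph (n : nat) (e : rel 'I_n) : Prop :=
  (forall u v, e u v = e v u) /\ (forall u, e u u = false).

(* Threshold graph: the vertices can be listed in the order in which they were
   added (sigma v = position of vertex v), with b k = true iff the vertex added
   at position k was added as a dominating vertex (b at position 0 is irrelevant);
   two distinct vertices are adjacent iff the later-added one was dominating.
   A threshold graph has at least one vertex (it starts from a single vertex). *)
Definition threshold_graph (n : nat) (e : rel 'I_n) : Prop :=
  simple_graph e /\ (0 < n)%N /\
  exists (sigma : 'S_n) (b : 'I_n -> bool),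
    forall u v, u != v ->
      e u v = b (if (sigma u < sigma v)%N then sigma v else sigma u).

Definition inS (R : realType) (n : nat) (e : rel 'I_n) (A : 'M[R]_n) : Prop :=
  A^T = A /\ (forall i j, i != j -> (A i j != 0) = e i j).

Definition DSpec (R : realType) (n : nat) (A : 'M[R]_n) : pred R :=
  fun a => eigenvalue A a.

Definition q_le (R : realType) (n : nat) (e : rel 'I_n) (k : nat) : Prop :=
  exists A : 'M[R]_n, inS e A /\
    exists s : seq R, uniq s /\ (size s <= k)%N /\ (forall a, DSpec A a <-> a \in s).

(* Main.v *)
Require Import Defs.
From mathcomp Require Import all_boot all_order all_algebra all_fingroup.
From mathcomp Require Import reals ring lra zify.
Set Implicit Arguments. Unset Strict Implicit. Unset Printing Implicit Defensive.
Import Order.TTheory GRing.Theory Num.Theory.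
Local Open Scope ring_scope.

Lemma trw_sym (R : realType) k (N : 'M[R]_k) (w : 'rV_k) th :
  N^T = N -> w *m N = th *: w -> N *m w^T = th *: w^T.
Proof. by move=> hN hw; rewrite -{1}hN -trmx_mul hw linearZ. Qed.

Lemma eig_dom (R : realType) k (N : 'M[R]_k) (w : 'rV_k) (th mu : R) (v : 'rV_(1 + k)) :
  N^T = N -> w *m N = th *: w -> w *m w^T = 1%:M ->
  v *m block_mx th%:M w w^T N = mu *: v -> v != 0 ->
  (mu - th) ^+ 2 = 1 \/ exists2 x : 'rV_k, x *m N = mu *: x & x != 0.
Proof.
move=> hN hw hww; rewrite -[v]hsubmxK.
set y := lsubmx v; set x := rsubmx v => Hv nz.
move: Hv; rewrite mul_row_block scale_row_mx => /eq_row_mx [E1 E2].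
have [y0|ynz] := eqVneq y 0.
  right; exists x; first by move: E2; rewrite y0 mul0mx add0r.
  by apply: contraNneq nz => ->; rewrite y0 row_mx0.
left.
have E3 : y + th *: (x *m w^T) = mu *: (x *m w^T).
  have := congr1 (mulmx^~ w^T) E2.
  by rewrite mulmxDl -!mulmxA hww mulmx1 (trw_sym hN hw) -scalemxAr -scalemxAl.
have Es : x *m w^T = (mu - th) *: y.
  by rewrite scalerBl -E1 mul_mx_scalar addrC addKr.
move: E3; rewrite Es !scalerA => E3.
have : ((mu - th) ^+ 2 - 1) *: y = 0.
  have -> : ((mu - th) ^+ 2 - 1) *: y =
     (mu * (mu - th)) *: y - (1 *: y + (th * (mu - th)) *: y).
    by rewrite -scalerDl -scalerBl; congr (_ *: y); ring.
  by rewrite scale1r E3 subrr.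
move/eqP; rewrite scaler_eq0 (negPf ynz) orbF subr_eq0 => /eqP //.
Qed.

Lemma eig_iso (R : realType) k (N : 'M[R]_k) (th mu : R) (v : 'rV_(1 + k)) :
  v *m block_mx th%:M 0 0 N = mu *: v -> v != 0 ->
  mu = th \/ exists2 x : 'rV_k, x *m N = mu *: x & x != 0.
Proof.
rewrite -[v]hsubmxK.
set y := lsubmx v; set x := rsubmx v => Hv nz.
move: Hv; rewrite mul_row_block scale_row_mx !mulmx0 addr0 add0r.
move=> /eq_row_mx [E1 E2].
have [y0|ynz] := eqVneq y 0.
  right; exists x => //.
  by apply: contraNneq nz => ->; rewrite y0 row_mx0.
left; move: E1; rewrite mul_mx_scalar => /eqP; rewrite -subr_eq0 -scalerBl.
by rewrite scaler_eq0 (negPf ynz) orbF subr_eq0 => /eqP.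
Qed.

Definition rr (R : realType) : R := Num.sqrt (2^-1).

Lemma rr2 (R : realType) : rr R ^+ 2 = 2^-1.
Proof. by rewrite sqr_sqrtr // invr_ge0. Qed.

Lemma rr_neq0 (R : realType) : rr R != 0.
Proof. by rewrite /rr sqrtr_eq0 invr_le0 -ltNge ltr0n. Qed.

Fixpoint build (R : realType) (b : nat -> bool) (k : nat) : 'M[R]_k.+1 * 'rV[R]_k.+1 * bool :=
  match k with
  | 0 => (0, const_mx 1, false)
  | k'.+1 => let: (N, w, t) := build R b k' in
     let th : R := if t then 1 else 0 in
     if b k'.+1 then (block_mx th%:M w w^T N, rr R *: row_mx (if t then -1 else 1)%:M w, ~~ t)
     else (block_mx th%:M 0 0 N, rr R *: row_mx 1%:M w, t)
  end.

Lemma scalar_mxD' (R : realType) n (a b : R) : (a + b)%:M = a%:M + b%:M :> 'M_n.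
Proof. by apply/matrixP => i j; rewrite !mxE mulrnDl. Qed.

Lemma dom_vec (R : realType) k (N : 'M[R]_k) (w : 'rV_k) (th sg : R) :
  w *m N = th *: w -> w *m w^T = 1%:M -> sg ^+ 2 = 1 ->
  (rr R *: row_mx sg%:M w) *m block_mx th%:M w w^T N = (th + sg) *: (rr R *: row_mx sg%:M w).
Proof.
move=> hw hww hsg.
rewrite -scalemxAl mul_row_block scalerA (mulrC _ (rr R)) -scalerA. congr (_ *: _). rewrite scale_row_mx.
congr row_mx.
  rewrite hww -scalar_mxM -scalar_mxD' scale_scalar_mx; congr (_%:M).
  by rewrite mulrDl -expr2 hsg mulrC addrC.
by rewrite mul_scalar_mx hw -scalerDl addrC.
Qed.

Lemma dom_norm (R : realType) k (w : 'rV[R]_k) (sg : R) :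
  w *m w^T = 1%:M -> sg ^+ 2 = 1 ->
  (rr R *: row_mx sg%:M w) *m (rr R *: row_mx sg%:M w)^T = 1%:M.
Proof.
move=> hww hsg.
rewrite linearZ /= -scalemxAl -scalemxAr scalerA tr_row_mx mul_row_col tr_scalar_mx.
rewrite -scalar_mxM hww -scalar_mxD' scale_scalar_mx; congr (_%:M).
rewrite -!expr2 hsg rr2; by field.
Qed.

Lemma iso_vec (R : realType) k (N : 'M[R]_k) (w : 'rV_k) (th : R) :
  w *m N = th *: w ->
  (rr R *: row_mx 1%:M w) *m block_mx th%:M 0 0 N = th *: (rr R *: row_mx 1%:M w).
Proof.
move=> hw.
rewrite -scalemxAl mul_row_block scalerA (mulrC _ (rr R)) -scalerA. congr (_ *: _). rewrite scale_row_mx.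
congr row_mx.
  by rewrite !mulmx0 addr0 mul1mx scale_scalar_mx mulr1.
by rewrite !mulmx0 add0r hw.
Qed.

Lemma vec_full (R : realType) k (w : 'rV[R]_k) (sg : R) :
  sg != 0 -> (forall j, w 0 j != 0) -> forall j, (rr R *: row_mx sg%:M w) 0 j != 0.
Proof.
move=> hsg hw j; rewrite mxE -[j]splitK; case: split => j' /=.
  by rewrite row_mxEl mxE (ord1 j') eqxx mulr1n mulf_neq0 ?rr_neq0.
by rewrite row_mxEr mulf_neq0 ?rr_neq0.
Qed.

Lemma blk_sym (R : realType) k (N : 'M[R]_k) (B : 'rV_k) (th : R) :
  N^T = N -> (block_mx th%:M B B^T N)^T = block_mx th%:M B B^T N.
Proof. by move=> hN; rewrite tr_block_mx trmxK tr_scalar_mx hN. Qed.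

Lemma blk_sym0 (R : realType) k (N : 'M[R]_k) (th : R) :
  N^T = N -> (block_mx (th%:M : 'M_1) 0 0 N)^T = block_mx th%:M 0 0 N.
Proof. by move=> hN; rewrite tr_block_mx !trmx0 tr_scalar_mx hN. Qed.

Lemma blk_pat (R : realType) (b : nat -> bool) k (N : 'M[R]_k.+1) (B : 'rV_k.+1) (th : R) :
  (forall j, (B 0 j != 0) = b k.+1) ->
  (forall i j, i != j -> (N i j != 0) = b (k - minn i j)%N) ->
  forall i j : 'I_(1 + k.+1), i != j ->
    (block_mx th%:M B B^T N i j != 0) = b (k.+1 - minn i j)%N.
Proof.
move=> hB hN i j; rewrite -[i]splitK -[j]splitK.
case: (split i) => i'; case: (split j) => j' /=.
- by rewrite (ord1 i') (ord1 j') eqxx.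
- by rewrite block_mxEur (ord1 i') hB => _; congr b; rewrite /= min0n subn0.
- by rewrite block_mxEdl mxE (ord1 j') hB => _; congr b; rewrite /= minn0 subn0.
- rewrite block_mxEdr => hij; rewrite hN; last first.
    by apply: contraNneq hij => ->.
  congr b; rewrite /=; lia.
Qed.

Lemma blk_pat0 (R : realType) (b : nat -> bool) k (N : 'M[R]_k.+1) (th : R) :
  b k.+1 = false ->
  (forall i j, i != j -> (N i j != 0) = b (k - minn i j)%N) ->
  forall i j : 'I_(1 + k.+1), i != j ->
    (block_mx th%:M 0 0 N i j != 0) = b (k.+1 - minn i j)%N.
Proof.
move=> hb hN i j; rewrite -[i]splitK -[j]splitK.
case: (split i) => i'; case: (split j) => j' /=.
- by rewrite (ord1 i') (ord1 j') eqxx.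
- by rewrite (ord1 i') block_mxEur mxE eqxx => _ /=; rewrite -hb; congr b; rewrite /=; lia.
- by rewrite (ord1 j') block_mxEdl mxE eqxx => _ /=; rewrite -hb; congr b; rewrite /=; lia.
- rewrite block_mxEdr => hij; rewrite hN; last first.
    by apply: contraNneq hij => ->.
  congr b; rewrite /=; lia.
Qed.

Definition Sset (R : realType) : seq R := [:: -1; 0; 1; 2].

Lemma sq1_mem (R : realType) (t : bool) (mu : R) :
  (mu - (if t then 1 else 0)) ^+ 2 = 1 -> mu \in Sset R.
Proof.
move/eqP; rewrite sqrf_eq1 => /orP[] /eqP h; rewrite !inE.
all: case: t h => h.
- have -> : mu = 2 by lra.
  by rewrite eqxx !orbT.
- have -> : mu = 1 by lra.
  by rewrite eqxx !orbT.
- have -> : mu = 0 by lra.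
  by rewrite eqxx !orbT.
- have -> : mu = -1 by lra.
  by rewrite eqxx.
Qed.

Lemma build_good (R : realType) (b : nat -> bool) k :
  let: (N, w, t) := build R b k in
  [/\ N^T = N, w *m N = (if t then 1 else 0) *: w, w *m w^T = 1%:M,
   forall j, w 0 j != 0
   & (forall i j, i != j -> (N i j != 0) = b (k - minn i j)%N) /\
     (forall (v : 'rV_k.+1) mu, v *m N = mu *: v -> v != 0 -> mu \in Sset R)].
Proof.
elim: k => [|k IH] /=.
  split; last split.
  - by rewrite trmx0.
  - by rewrite mulmx0 scale0r.
  - apply/matrixP => i j; rewrite (ord1 i) (ord1 j) !mxE big_ord1 !mxE mulr1; done.
  - by move=> j; rewrite mxE oner_neq0.
  - by move=> i j; rewrite (ord1 i) (ord1 j) eqxx.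
  - move=> v mu; rewrite mulmx0 => /esym /eqP; rewrite scaler_eq0 => /orP[/eqP -> _|/eqP -> ]; last by rewrite eqxx.
    by rewrite !inE eqxx orbT.
move: IH; case: (build R b k) => [[N w] t] [hN hw hww hfull [hpat heig]].
case hb: (b k.+1).
  have hsg : (if t then -1 else 1 : R) ^+ 2 = 1 by case: t {hw}; rewrite ?sqrrN expr1n.
  split; last split.
  - exact: blk_sym.
  - rewrite dom_vec //; congr (_ *: _); case: t {hw hsg} => /=; lra.
  - exact: dom_norm.
  - by apply: vec_full => //; case: t {hw hsg}; rewrite ?oppr_eq0 oner_neq0.
  - by apply: blk_pat => // j; rewrite hb hfull.
  - move=> v mu hv nz; have [|[x hx xnz]] := eig_dom hN hw hww hv nz.
      exact: sq1_mem.
    exact: (heig x).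
split; last split.
- exact: blk_sym0.
- exact: iso_vec.
- by apply: dom_norm => //; rewrite expr1n.
- by apply: vec_full => //; rewrite oner_neq0.
- exact: blk_pat0.
- move=> v mu hv nz; have [->|[x hx xnz]] := eig_iso hv nz.
    by case: (t); rewrite !inE eqxx ?orbT.
  exact: (heig x).
Qed.

Lemma uniq4 (R : realType) (l : R) : l != 0 -> uniq [:: - l; 0; l; 2 * l].
Proof.
move=> hl; have H : forall x y : R, (x = y -> l = 0) -> x != y.
  by move=> x y h; apply/eqP => /h /eqP; rewrite (negPf hl).
rewrite /= !inE !negb_or !H //= => h; lra.
Qed.

Theorem theorem1 (R : realType) (n : nat) (e : rel 'I_n) (lambda : R) :
  threshold_graph e -> lambda != 0 ->
  (exists M : 'M[R]_n, inS e M /\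
     (forall a, DSpec M a -> a \in [:: - lambda; 0; lambda; 2 * lambda]))
  /\ q_le R e 4.
Proof.
case: n e => [|m] e [_ [//= _ [sigma [b H]]]] hl.
pose bb p := b (inord p).
have := build_good R bb m.
case: (build R bb m) => [[N w] t] [hN hw hww hfull [hpat heig]].
have finj : injective (fun u : 'I_m.+1 => rev_ord (sigma u)).
  by move=> u v /rev_ord_inj /perm_inj.
pose s := perm finj.
pose M0 := \matrix_(u, v) N (s u) (s v).
pose M := lambda *: M0.
have hNs : forall i j, N j i = N i j by move=> i j; rewrite -{2}hN mxE.
have MS : inS e M.
  split.
    by apply/matrixP => i j; rewrite !mxE hNs.
  move=> u v huv; rewrite !mxE mulf_eq0 negb_or hl /=.
  rewrite hpat; last by apply: contra huv => /eqP /perm_inj ->.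
  rewrite H // /bb !permE; congr b; apply: val_inj; rewrite /= inordK; last first.
    rewrite /=; lia.
  have := ltn_ord (sigma u); have := ltn_ord (sigma v).
  by case: ifP => /= h1 h2 h3; lia.
have MD : forall a, DSpec M a -> a \in [:: - lambda; 0; lambda; 2 * lambda].
  move=> a /eigenvalueP [v hv vnz].
  have hv0 : v *m M0 = (lambda^-1 * a) *: v.
    by rewrite -scalerA -hv -scalemxAr scalerA mulVf // scale1r.
  pose v' := \row_j v 0 ((s^-1)%g j).
  have hv' : v' *m N = (lambda^-1 * a) *: v'.
    apply/matrixP => i j; rewrite !mxE.
    rewrite (reindex_perm s) /=.
    have := congr1 (fun A : 'rV[R]_m.+1 => A 0 ((s^-1)%g j)) hv0; rewrite !mxE => <-.
    by apply: eq_bigr => u _; rewrite !mxE permK permKV.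
  have v'nz : v' != 0.
    apply: contra vnz => /eqP hz; apply/eqP/matrixP => i j.
    by have := congr1 (fun A : 'rV[R]_m.+1 => A i (s j)) hz; rewrite !mxE (ord1 i) permK.
  have hc := heig _ _ hv' v'nz.
  have -> : a = lambda * (lambda^-1 * a) by rewrite mulrA divff // mul1r.
  move: (lambda^-1 * a) hc => c; rewrite /Sset !inE => /or4P[] /eqP ->.
  - by rewrite mulrN1 eqxx.
  - by rewrite mulr0 eqxx orbT.
  - by rewrite mulr1 eqxx !orbT.
  - by rewrite mulrC eqxx !orbT.
split; first by exists M.
exists M; split=> //.
exists (filter (DSpec M) [:: - lambda; 0; lambda; 2 * lambda]); split; last split.
- by apply: filter_uniq; apply: uniq4.
- by rewrite size_filter; apply: (leq_trans (count_size _ _)).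
- move=> a; rewrite mem_filter; split.
    by move=> h; rewrite h MD.
  by case/andP.
Qed.
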